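(* Let $c\in(0,1)$ and $t\in\mathbb{N}$. There exist $n_0$ and $C>0$ depending on $c$ and $t$ such that for all $n\ge n_0$: if $\mathcal{F}\subseteq\mathcal{M}_{2n}$ is a $t$-intersecting family with $|\mathcal{F}|\ge c(2(n-t)-1)!!$, then there is a set $T$ of $t$ pairwise disjoint edges of $K_{2n}$ such that \[|\mathcal{F}\setminus\mathcal{F}\!\downarrow_T| \le C\,(2(n-t-1)-1)!!,\] i.e. $|\mathcal{F}\setminus\mathcal{F}\!\downarrow_T| = O((2(n-t-1)-1)!!)$.
   Context: $\mathcal{M}_{2n}$ is the set of perfect matchings of $K_{2n}$. A family $\mathcal{F}$ is $t$-intersecting if $|m\cap m'|\ge t$ for all $m,m'\in\mathcal{F}$. For a set $S$ of disjoint edges, $\mathcal{F}\!\downarrow_S=\{m\in\mathcal{F}: S\subseteq m\}$. $(2k-1)!!=1\cdot3\cdots(2k-1)$. *)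

(* Defs.v *)
From mathcomp Require Import all_boot all_order all_algebra.
From mathcomp Require Export reals.
Set Implicit Arguments. Unset Strict Implicit. Unset Printing Implicit Defensive.

(* Vertices of K_{2n}: 'I_(2n).  An edge is a 2-element subset of vertices. *)
Definition edge (V : finType) (e : {set V}) : bool := #|e| == 2.

Definition perfect_matching (V : finType) (m : {set {set V}}) : bool :=
  [forall e in m, edge e] && partition m [set: V].

Definition disjoint_edges (V : finType) (S : {set {set V}}) : bool :=
  [forall e in S, edge e] && trivIset S.

Definition t_intersecting (V : finType) (t : nat) (F : {set {set {set V}}}) : bool :=
  [forall m in F, forall m' in F, t <= #|m :&: m'|].

Definition restrict (V : finType) (F : {set {set {set V}}}) (S : {set {set V}}) :=
  [set m in F | S \subset m].

(* dfo k = (2k-1)!! = 1 * 3 * ... * (2k-1); dfo 0 = 1 = (-1)!!. *)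
Definition dfo (k : nat) : nat := \prod_(i < k) (2 * i + 1).

(* Main.v *)
Require Import Defs.
From mathcomp Require Import all_boot all_order all_algebra reals zify ring.
Set Implicit Arguments. Unset Strict Implicit. Unset Printing Implicit Defensive.

Lemma card_bigcup_le (T I : finType) (P : {pred I}) (A : I -> {set T}) :
  #|\bigcup_(i in P) A i| <= \sum_(i in P) #|A i|.
Proof.
elim/big_ind2: _ => [|x1 y1 x2 y2 h1 h2|i _]; first by rewrite cards0.
  by rewrite cardsU; lia.
by [].
Qed.

Lemma binom_term s j : 'C(s, j) * 2 ^ (s - j) <= 3 ^ s.
Proof.
case: (leqP j s) => js; last by rewrite bin_small // mul0n.
have -> : 3 ^ s = (2 + 1) ^ s by [].
rewrite expnDn (bigD1 (Ordinal (_ : j < s.+1))) //= ?exp1n ?muln1 //.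
exact: leq_addr.
Qed.

Lemma ffact_lb s j : j <= s -> (s - j + 1) ^ j <= 'C(s, j) * j`!.
Proof.
move=> js; rewrite bin_ffact ffact_prod.
apply: (@leq_trans (\prod_(i < j) (s - j + 1))).
  by rewrite prod_nat_const card_ord.
by apply: leq_prod => i _; have := ltn_ord i; lia.
Qed.

Lemma poly_exp e : exists D, forall s, (s + 1) ^ e.+1 * 2 ^ s <= D * 3 ^ s.
Proof.
pose D0 := 4 ^ e.+1 * e.+1`!.
pose D1 := \max_(s < (2 * e).+2) ((s + 1) ^ e.+1 * 2 ^ s).
exists (D0 + D1) => s.
case: (leqP s (2 * e).+1) => hs.
  apply: (@leq_trans D1).
    by apply: (@leq_bigmax_cond _ _ _ (Ordinal (_ : s < (2 * e).+2))) => //.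
  rewrite mulnDl; apply: leq_trans (leq_addl _ _).
  by apply: leq_pmulr; rewrite expn_gt0.
rewrite mulnDl; apply: leq_trans (leq_addr _ _).
have h1 : (s + 1) ^ e.+1 <= 2 ^ e.+1 * (s - e.+1 + 1) ^ e.+1.
  by rewrite -expnMn leq_exp2r //; lia.
have h2 := @ffact_lb s e.+1 (_ : e.+1 <= s); have {h2}h2 := h2 ltac:(lia).
have h3 := binom_term s e.+1.
have h4 : 2 ^ s = 2 ^ (s - e.+1) * 2 ^ e.+1 by rewrite -expnD subnK //; lia.
apply: (@leq_trans (2 ^ e.+1 * ('C(s, e.+1) * e.+1`!) * 2 ^ s)).
  by rewrite leq_mul2r; apply/orP; right; apply: leq_trans h1 _; rewrite leq_mul2l h2 orbT.
rewrite h4 /D0.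
have -> : 2 ^ e.+1 * ('C(s, e.+1) * e.+1`!) * (2 ^ (s - e.+1) * 2 ^ e.+1) =
   ('C(s, e.+1) * 2 ^ (s - e.+1)) * (2 ^ e.+1 * 2 ^ e.+1 * e.+1`!) by ring.
have -> : 4 ^ e.+1 = 2 ^ e.+1 * 2 ^ e.+1 by rewrite -expnMn.
rewrite [X in _ <= X]mulnC; by rewrite leq_mul2r h3 orbT.
Qed.

Lemma exp_beats K e : exists s0, forall s, s0 <= s -> K * (s + 1) ^ e * 2 ^ s < 3 ^ s.
Proof.
have [D hD] := poly_exp e.
exists (K * D); move=> s hs.
have := hD s; rewrite expnSr => H.
have H3 : 0 < 3 ^ s by rewrite expn_gt0.
rewrite -(@ltn_pmul2r (s + 1)) //; last by lia.
apply: (@leq_ltn_trans (K * (D * 3 ^ s))).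
  have -> : K * (s + 1) ^ e * 2 ^ s * (s + 1) = K * ((s + 1) ^ e * (s + 1) * 2 ^ s) by ring.
  by rewrite leq_mul2l H orbT.
rewrite mulnA mulnC ltn_pmul2l //; lia.
Qed.

Lemma asym t M : exists n0, forall n s, n0 <= n ->
  3 ^ s <= 2 ^ s * (2 * n) ^ t.+1 -> M * (s ^ t.+1 + 1) + t + 4 * s + 3 <= n.
Proof.
pose B s := M * (s ^ t.+1 + 1) + t + 4 * s + 3.
pose K' := 2 * M + t + 7.
have hB : forall s, B s <= K' * (s + 1) ^ t.+1.
  move=> s; have e1 : s ^ t.+1 <= (s + 1) ^ t.+1 by rewrite leq_exp2r //; lia.
  have e2 : s + 1 <= (s + 1) ^ t.+1.
    by rewrite -{1}(expn1 (s + 1)) leq_pexp2l //; lia.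
  rewrite /B /K'; nia.
have hBm : forall s1 s2, s1 <= s2 -> B s1 <= B s2.
  move=> s1 s2 h; rewrite /B; have : s1 ^ t.+1 <= s2 ^ t.+1 by rewrite leq_exp2r.
  nia.
have [s0 hs0] := exp_beats ((2 * K') ^ t.+1) (t.+1 * t.+1).
exists (B s0) => n s hn H.
case: (leqP s0 s) => hs; last by apply: leq_trans hn; apply: hBm; lia.
rewrite leqNgt; apply/negP => lt.
have : (2 * n) ^ t.+1 <= (2 * K') ^ t.+1 * (s + 1) ^ (t.+1 * t.+1).
  rewrite expnM -expnMn leq_exp2r //; have := hB s; rewrite /B -mulnA => hb; lia.
move=> H2; have := hs0 s hs.
have : 2 ^ s * (2 * n) ^ t.+1 <= 2 ^ s * ((2 * K') ^ t.+1 * (s + 1) ^ (t.+1 * t.+1)).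
  by rewrite leq_mul2l H2 orbT.
move: H; move: (3 ^ s) (2 ^ s * (2 * n) ^ t.+1) => X Y H1 H3 H4.
have : Y <= (2 * K') ^ t.+1 * (s + 1) ^ (t.+1 * t.+1) * 2 ^ s.
  apply: leq_trans H3 _; apply: eq_leq; ring.
lia.
Qed.

Lemma bin_le_exp s k : 'C(s, k) <= s ^ k.
Proof.
apply: (@leq_trans ('C(s, k) * k`!)); first by rewrite leq_pmulr ?fact_gt0.
rewrite bin_ffact ffact_prod.
apply: (@leq_trans (\prod_(i < k) s)); last by rewrite prod_nat_const card_ord.
by apply: leq_prod => i _; apply: leq_subr.
Qed.

Lemma exists_sub (T : finType) (A : {set T}) k : k <= #|A| ->
  exists X : {set T}, X \subset A /\ #|X| = k.
Proof.
rewrite -bin_gt0 -cards_draws => /card_gt0P [X]; rewrite inE => /andP[h /eqP e].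
by exists X.
Qed.

Section Match.
Variable n : nat.
Local Notation V := 'I_(2*n).
Local Notation MT := {set {set V}}.

Definition Mof (S : MT) : {set MT} := [set m | perfect_matching m & S \subset m].

Lemma pm_triv (m : MT) : perfect_matching m -> trivIset m.
Proof. by case/andP=> _ /and3P[]. Qed.
Lemma pm_cover (m : MT) : perfect_matching m -> cover m = setT.
Proof. by case/andP=> _ /and3P[/eqP]. Qed.
Lemma pm_edge (m : MT) e : perfect_matching m -> e \in m -> #|e| = 2.
Proof. by case/andP=> /forallP H _ em; have /implyP/(_ em)/eqP := H e. Qed.
Lemma pm_uniq (m : MT) B1 B2 x : perfect_matching m -> B1 \in m -> B2 \in m ->
  x \in B1 -> x \in B2 -> B1 = B2.
Proof.
move=> pm b1 b2 x1 x2.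
by rewrite -(def_pblock (pm_triv pm) b1 x1) (def_pblock (pm_triv pm) b2 x2).
Qed.
Lemma cover_card (S : MT) : trivIset S -> (forall e, e \in S -> #|e| = 2) ->
  #|cover S| = 2 * #|S|.
Proof.
move=> /eqP <- H; rewrite (eq_bigr (fun _ => 2)); last by move=> i /H.
by rewrite sum_nat_const mulnC.
Qed.
Lemma pm_card (m : MT) : perfect_matching m -> #|m| = n.
Proof.
move=> pm; have := cover_card (pm_triv pm) (fun e => @pm_edge m e pm).
by rewrite pm_cover // cardsT card_ord; lia.
Qed.


Lemma dfoS k : dfo k.+1 = (2 * k + 1) * dfo k.
Proof. by rewrite /dfo big_ord_recr /= mulnC. Qed.
Lemma dfo_gt0 k : 0 < dfo k.
Proof. by elim: k => [|k IH]; rewrite ?dfoS ?muln_gt0 ?IH ?addn1 // /dfo big_ord0. Qed.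

Lemma pm_sub_card (m S : MT) : perfect_matching m -> S \subset m -> #|S| <= n.
Proof. by move=> pm sS; have := subset_leq_card sS; rewrite (pm_card pm). Qed.

Lemma Mof_boundk k : forall S : MT, #|S| + k = n -> #|Mof S| <= dfo k.
Proof.
elim: k => [|k IH] S hS.
  rewrite /dfo big_ord0; apply: (@leq_trans #|[set S]|); last by rewrite cards1.
  apply: subset_leq_card; apply/subsetP => m; rewrite !inE => /andP[pm sS].
  apply/eqP; apply/esym/eqP; rewrite eqEcard sS (pm_card pm); lia.
case: (set_0Vmem (Mof S)) => [-> | [m0]]; first by rewrite cards0.
rewrite inE => /andP[pm0 sS0].
have [e0 e0m0 e0S] : exists2 e0, e0 \in m0 & e0 \notin S.
  apply/subsetPn; apply/negP => h; have := subset_leq_card h.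
  rewrite (pm_card pm0); lia.
have : 0 < #|e0| by rewrite (pm_edge pm0 e0m0).
case/card_gt0P => v ve0.
have hvS : forall B, B \in S -> v \notin B.
  move=> B BS; apply/negP => vB.
  have BS0 : B \in m0 by apply: (subsetP sS0).
  by have := pm_uniq pm0 e0m0 BS0 ve0 vB => E; rewrite E BS in e0S.
have trS : trivIset S by apply: trivIsetS sS0 (pm_triv pm0).
have edS : forall e, e \in S -> #|e| = 2.
  by move=> e eS; apply: (pm_edge pm0); apply: (subsetP sS0).
have vnc : v \notin cover S.
  by apply/bigcupP => -[B BS vB]; have := hvS B BS; rewrite vB.
set W := ~: cover S :\ v.
have cW : #|W| = 2 * k + 1.
  have := cardsD1 v (~: cover S); rewrite inE vnc /= cardsCs setCK.
  rewrite cover_card // card_ord /W; lia.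
have sub : Mof S \subset \bigcup_(w in W) Mof ([set v; w] |: S).
  apply/subsetP => m; rewrite inE => /andP[pm sS].
  have vc : v \in cover m by rewrite pm_cover.
  have Bm := pblock_mem vc.
  have vB : v \in pblock m v by rewrite mem_pblock.
  have [w [wv Bw]] : exists w, w != v /\ pblock m v = [set v; w].
    have := pm_edge pm Bm; move/eqP/cards2P => -[x [y [xy E]]].
    move: vB; rewrite E !inE => /orP[/eqP vx | /eqP vy].
      by exists y; rewrite vx; split => //; rewrite eq_sym.
    by exists x; rewrite vy setUC; split.
  apply/bigcupP; exists w.
    rewrite !inE wv /=; apply/bigcupP => -[B' B'S wB'].
    have B'm : B' \in m by apply: (subsetP sS).
    have wB : w \in pblock m v by rewrite Bw !inE eqxx orbT.
    have := pm_uniq pm B'm Bm wB' wB => E.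
    by have := hvS B' B'S; rewrite E vB.
  by rewrite inE pm /= subUset sS andbT sub1set -Bw.
apply: leq_trans (subset_leq_card sub) _.
apply: leq_trans (card_bigcup_le _ _) _.
rewrite dfoS -cW -sum_nat_const; apply: leq_sum => w _; apply: IH.
rewrite cardsU1; have -> : [set v; w] \notin S.
  by apply/negP => /hvS; rewrite !inE eqxx.
lia.
Qed.

Lemma Mof_bound (S : MT) : #|Mof S| <= dfo (n - #|S|).
Proof.
case: (leqP #|S| n) => h; first by apply: Mof_boundk; lia.
have -> : Mof S = set0.
  apply/setP => m; rewrite !inE; apply/negP => /andP[pm sS].
  by have := pm_sub_card pm sS; lia.
by rewrite cards0.
Qed.


Definition down (G : {set MT}) (S : MT) := [set m in G | S \subset m].
Definition Pp s := \prod_(n - s <= i < n) (2 * i + 1).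
Definition Phi (G : {set MT}) (S : MT) :=
  #|down G S| * 2 ^ #|S| * 3 ^ (n - #|S|) * Pp #|S|.
Definition spread (A : {set MT}) (S : MT) :=
  forall e, e \notin S -> 2 * (2 * (n - #|S|) - 1) * #|[set a in A | e \in a]| <= 3 * #|A|.

Lemma dfo_split s : s <= n -> dfo n = dfo (n - s) * Pp s.
Proof.
move=> sn; rewrite /dfo /Pp -!(big_mkord xpredT (fun i => 2 * i + 1)).
by rewrite (big_cat_nat (n := n - s)) ?leq_subr.
Qed.
Lemma Pp_gt0 s : 0 < Pp s.
Proof. by rewrite /Pp; apply: prodn_gt0 => i; rewrite addn1. Qed.
Lemma PpS s : s < n -> Pp s.+1 = (2 * (n - s) - 1) * Pp s.
Proof.
move=> sn; rewrite /Pp big_ltn; last by lia.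
have -> : (n - s.+1).+1 = n - s by lia.
by congr (_ * _); lia.
Qed.
Lemma Pp0 : Pp 0 = 1.
Proof. by rewrite /Pp subn0 big_geq. Qed.

Lemma extract (G : {set MT}) : (forall m, m \in G -> perfect_matching m) ->
  0 < #|G| -> exists S : MT,
  [/\ 0 < #|down G S|, spread (down G S) S & #|G| * 3 ^ #|S| <= dfo n * 2 ^ #|S|].
Proof.
move=> pmG G0.
case: (@arg_maxnP _ set0 xpredT (Phi G) isT) => S _ hmax.
have P0 : Phi G set0 = #|G| * 3 ^ n.
  rewrite /Phi cards0 Pp0 subn0 expn0 muln1 muln1; congr (_ * _).
  by apply: eq_card => m; rewrite !inE sub0set andbT.
have hS := hmax set0 isT; rewrite P0 in hS.
have A0 : 0 < #|down G S|.
  rewrite lt0n; apply/eqP => E; move: hS; rewrite /Phi E !mul0n.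
  have : 0 < 3 ^ n by rewrite expn_gt0.
  lia.
have sn : #|S| <= n.
  move/card_gt0P: A0 => [a]; rewrite inE => /andP[aG sa].
  exact: pm_sub_card (pmG a aG) sa.
exists S; split => //.
- move=> e eS.
  case: (set_0Vmem [set a in down G S | e \in a]) => [-> | [a]].
    by rewrite cards0 muln0.
  rewrite !inE => /andP[/andP[aG sa] ea].
  set S' := e |: S.
  have cS' : #|S'| = #|S|.+1 by rewrite cardsU1 eS.
  have sn' : #|S| < n.
    have := pm_sub_card (pmG a aG) (_ : S' \subset a); rewrite cS'; apply.
    by rewrite subUset sub1set ea sa.
  have dS' : down G S' = [set a in down G S | e \in a].
    apply/setP => m; rewrite !inE subUset sub1set.
    by case: (m \in G); case: (e \in m); case: (S \subset m).
  have := hmax S' isT; rewrite /Phi dS' cS' PpS //.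
  have -> : n - #|S| = (n - #|S|.+1).+1 by lia.
  rewrite expnS expnS.
  have A0' : 0 < 2 ^ #|S| by rewrite expn_gt0.
  have B0' : 0 < 3 ^ (n - #|S|.+1) by rewrite expn_gt0.
  move: (#|[set a in down G S | e \in a]|) (#|down G S|) => b y.
  move: (2 ^ #|S|) (3 ^ (n - #|S|.+1)) (Pp_gt0 #|S|) A0' B0' => A B P0' A0' B0' H.
  rewrite -(@leq_pmul2r (A * B * Pp #|S|)); last by rewrite !muln_gt0 A0' B0' P0'.
  move: (Pp #|S|) (2 * (n - #|S|.+1).+1 - 1) H => P C H.
  have E1 : 2 * C * b * (A * B * P) = b * (2 * A) * B * (C * P) by ring.
  have E2 : 3 * y * (A * B * P) = y * A * (3 * B) * P by ring.
  by rewrite E1 E2.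
- have hA : #|down G S| <= dfo (n - #|S|).
    apply: leq_trans (Mof_bound S); apply: subset_leq_card.
    by apply/subsetP => m; rewrite !inE => /andP[mG ->]; rewrite pmG.
  rewrite -(@leq_pmul2r (3 ^ (n - #|S|))); last by rewrite expn_gt0.
  have -> : #|G| * 3 ^ #|S| * 3 ^ (n - #|S|) = #|G| * 3 ^ n.
    by rewrite -mulnA -expnD subnKC.
  apply: leq_trans hS _; rewrite /Phi (dfo_split sn).
  have : #|down G S| * (2 ^ #|S| * 3 ^ (n - #|S|) * Pp #|S|) <=
         dfo (n - #|S|) * (2 ^ #|S| * 3 ^ (n - #|S|) * Pp #|S|).
    by rewrite leq_mul2r hA orbT.
  move: (2 ^ #|S|) (3 ^ (n - #|S|)) (Pp #|S|) (dfo (n - #|S|)) (#|down G S|) => A B P D Y H.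
  have E1 : D * P * A * B = D * (A * B * P) by ring.
  by rewrite E1; move: H; rewrite !mulnA.
Qed.


Lemma union_bound (A : {set MT}) (E : MT) :
  (forall a, a \in A -> exists2 e, e \in E & e \in a) ->
  #|A| <= \sum_(e in E) #|[set a in A | e \in a]|.
Proof.
move=> H; apply: leq_trans (card_bigcup_le _ _); apply: subset_leq_card.
apply/subsetP => a aA; have [e eE ea] := H a aA.
by apply/bigcupP; exists e => //; rewrite inE aA ea.
Qed.

Lemma spread_sum (A : {set MT}) (S E : MT) : spread A S ->
  (forall e, e \in E -> e \notin S) ->
  (forall a, a \in A -> exists2 e, e \in E & e \in a) ->
  2 * (2 * (n - #|S|) - 1) * #|A| <= 3 * #|E| * #|A|.
Proof.
move=> sp hE H.
apply: leq_trans (_ : 2 * (2 * (n - #|S|) - 1) *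
   \sum_(e in E) #|[set a in A | e \in a]| <= _).
  by rewrite leq_mul2l union_bound ?orbT.
rewrite big_distrr /=.
apply: leq_trans (_ : _ <= \sum_(e in E) 3 * #|A|) _.
  by apply: leq_sum => e eE; exact: sp (hE e eE).
by rewrite sum_nat_const mulnCA mulnA.
Qed.

Lemma cross (F : {set MT}) t (A B : {set MT}) (S1 S2 : MT) :
  (forall m, m \in F -> perfect_matching m) -> t_intersecting t F ->
  A \subset F -> B \subset F -> 0 < #|A| -> 0 < #|B| ->
  (forall a, a \in A -> S1 \subset a) -> (forall b, b \in B -> S2 \subset b) ->
  spread A S1 -> spread B S2 -> 4 * #|S1| + 2 < n -> 4 * #|S2| + 2 < n ->
  t <= #|S1 :&: S2|.
Proof.
move=> pmF tF AF BF A0 B0 hA hB spA spB h1 h2.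
rewrite leqNgt; apply/negP => lt.
case: (boolP [exists a in A, [forall e in S2 :\: S1, e \notin a]]); last first.
  move/existsPn => hno.
  have hE : (forall e, e \in S2 :\: S1 -> e \notin S1).
    by move=> e; rewrite inE => /andP[].
  have H1 : (forall a, a \in A -> exists2 e, e \in S2 :\: S1 & e \in a).
    move=> a aA; have := hno a; rewrite aA /= => /forallPn [e].
    by rewrite negb_imply negbK => /andP[eE ea]; exists e.
  have H2 : 2 * (2 * (n - #|S1|) - 1) <= 3 * #|S2 :\: S1|.
    by rewrite -(leq_pmul2r A0); apply: spread_sum spA hE H1.
  have : #|S2 :\: S1| <= #|S2| by apply: subset_leq_card; apply: subsetDl.
  lia.
case/existsP => a /andP[aA /forallP ha].
have aF : a \in F by apply: (subsetP AF).
have pa := pmF a aF.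
have hE : (forall e, e \in a :\: S2 -> e \notin S2).
  by move=> e; rewrite inE => /andP[].
have H1 : (forall b, b \in B -> exists2 e, e \in a :\: S2 & e \in b).
  move=> b bB.
  case: (boolP [exists e in a :\: S2, e \in b]).
    by case/existsP => e /andP[eE eb]; exists e.
  move/existsPn => hno; exfalso.
  have bF : b \in F by apply: (subsetP BF).
  have := forallP tF a; rewrite aF /= => /forallP /(_ b); rewrite bF /= => tab.
  have : a :&: b \subset S1 :&: S2.
    apply/subsetP => e; rewrite !inE => /andP[ea eb].
    have := hno e; rewrite !inE ea eb /=.
    case: (boolP (e \in S2)) => eS2 //= _; rewrite andbT.
    have := ha e; rewrite !inE eS2 ea /=.
    by case: (e \in S1).
  move/subset_leq_card => h; have := leq_ltn_trans (leq_trans tab h) lt.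
  by rewrite ltnn.
have H2 : 2 * (2 * (n - #|S2|) - 1) <= 3 * #|a :\: S2|.
  by rewrite -(leq_pmul2r B0); apply: spread_sum spB hE H1.
have : #|a :\: S2| <= #|a| by apply: subset_leq_card; apply: subsetDl.
rewrite (pm_card pa); lia.
Qed.


Definition goodS (F : {set MT}) L (S : MT) := exists A : {set MT},
  [/\ A \subset F, 0 < #|A|, (forall a, a \in A -> S \subset a), spread A S &
      L * 3 ^ #|S| <= dfo n * 2 ^ #|S|].

Lemma pieces (F : {set MT}) L : (forall m, m \in F -> perfect_matching m) -> 0 < L ->
  forall G : {set MT}, G \subset F -> exists Sc : {set MT},
  (forall S, S \in Sc -> goodS F L S) /\
  #|[set m in G | [forall S in Sc, ~~ (S \subset m)]]| < L.
Proof.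
move=> pmF L0 G; move: {2}#|G|.+1 (ltnSn #|G|) => k; elim: k G => // k IH G Gk GF.
case: (ltnP #|G| L) => hGL.
  exists set0; split; first by move=> S; rewrite inE.
  apply: leq_ltn_trans hGL; apply: subset_leq_card; apply/subsetP => m.
  by rewrite inE => /andP[].
have pmG : forall m, m \in G -> perfect_matching m.
  by move=> m mG; apply: pmF; apply: (subsetP GF).
have [S [A0 spA bnd]] := extract pmG (leq_trans L0 hGL).
set A := down G S in A0 spA.
have AG : A \subset G by apply/subsetP => m; rewrite inE => /andP[].
set G' := G :\: A.
have cG' : #|G'| < k.
  have := cardsD G A; rewrite (setIidPr AG) => E.
  rewrite /G' E; lia.
have G'F : G' \subset F by apply: subset_trans GF; apply: subsetDl.
have [Sc' [good' rem']] := IH G' cG' G'F.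
exists (S |: Sc'); split.
  move=> S0; rewrite !inE => /orP[/eqP -> | ]; last exact: good'.
  exists A; split => //.
  - exact: subset_trans GF.
  - by move=> a; rewrite inE => /andP[].
  - apply: leq_trans bnd; rewrite leq_mul2r hGL orbT //.
apply: leq_ltn_trans rem'; apply: subset_leq_card; apply/subsetP => m.
rewrite !inE => /andP[mG /forallP hm].
have := hm S; rewrite !inE eqxx /= => nS.
rewrite mG nS /=; apply/forallP => S0; apply/implyP => S0c.
by have := hm S0; rewrite !inE S0c orbT.
Qed.

Lemma dfo_le t : t.+1 <= n -> dfo n <= dfo (n - t - 1) * (2 * n) ^ t.+1.
Proof.
move=> h; rewrite (dfo_split h); have -> : n - t - 1 = n - t.+1 by lia.
rewrite leq_mul2l; apply/orP; right.
rewrite /Pp (_ : (2 * n) ^ t.+1 = \prod_(n - t.+1 <= i < n) (2 * n)); last first.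
  by rewrite prod_nat_const_nat; congr expn; lia.
rewrite big_nat_cond [X in _ <= X]big_nat_cond; apply: leq_prod => i /andP[/andP[_ hi] _].
lia.
Qed.

End Match.

Lemma sz_aux a b s n : (a + b + 4 * s + 3 <= n -> 4 * s + 2 < n)%N.
Proof. lia. Qed.
Lemma sz_aux2 M t n : (M * (0 + 1) + t + 4 * 0 + 3 <= n -> M + t + 1 <= n)%N.
Proof. lia. Qed.
Lemma sz_aux3 M t X s n : (M * X + t + 4 * s + 3 <= n -> M * X + t + 1 <= n)%N.
Proof. lia. Qed.
Lemma sub_aux n t : (t.+2 <= n -> t.+1 <= n /\ n - t - 1 = n - t.+1)%N.
Proof. lia. Qed.

Import Order.TTheory GRing.Theory Num.Theory.
Local Open Scope ring_scope.

Theorem mainTheorem14 (R : realType) (c : R) (t : nat) :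
  0 < c < 1 ->
  exists (n0 : nat) (C : R), 0 < C /\
    forall n : nat, (n0 <= n)%N ->
    forall F : {set {set {set 'I_(2 * n)}}},
      (forall m, m \in F -> perfect_matching m) ->
      t_intersecting t F ->
      c * (dfo (n - t))%:R <= (#|F|)%:R ->
      exists T : {set {set 'I_(2 * n)}},
        [/\ disjoint_edges T, #|T| = t &
            (#|F :\: restrict F T|)%:R <= C * (dfo (n - t - 1))%:R].
Proof.
case/andP => c0 _.
have [M hM] : exists M : nat, 1 < c * M%:R.
  have h0 : 0 <= c^-1 by rewrite invr_ge0 ltW.
  exists (Num.Def.archi_bound c^-1).
  have h := archi_boundP h0; rewrite -(ltr_pM2l c0) mulfV in h => //.
  exact: lt0r_neq0.
have [n0 hn0] := asym t M.
exists (maxn n0 t.+2), 1; split => //.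
move=> n hn F pmF tF hF.
have hn0n : (n0 <= n)%N by move: hn; rewrite geq_max => /andP[].
have htn : (t.+2 <= n)%N by move: hn; rewrite geq_max => /andP[].
set L := dfo (n - t - 1).
have L0 : (0 < L)%N := dfo_gt0 _.
have dfoE : dfo (n - t) = ((2 * (n - t) - 1) * L)%N.
  rewrite /L; have -> : dfo (n - t) = dfo (n - t - 1).+1 by congr dfo; lia.
  by rewrite dfoS; congr (_ * _)%N; lia.
have hsize : forall s, (L * 3 ^ s <= dfo n * 2 ^ s)%N ->
    (M * (s ^ t.+1 + 1) + t + 4 * s + 3 <= n)%N.
  move=> s h; apply: hn0 => //.
  have h2 := dfo_le (_ : t.+1 <= n)%N; have {h2}h2 := h2 ltac:(lia).
  rewrite -(@leq_pmul2l L) //; apply: leq_trans h _.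
  rewrite mulnCA mulnC leq_mul2l; apply/orP; right; exact: h2.
have contra : forall X, (0 < X)%N -> (M * X + t + 1 <= n)%N -> (#|F| < X * L)%N -> False.
  move=> X X0 hX hFX.
  have h1 : (X%:R : R) < c * (2 * (n - t) - 1)%:R.
    apply: (@lt_le_trans _ _ (c * (M * X)%:R)).
      by rewrite natrM mulrA ltr_pMl // ltr0n.
    by rewrite ler_pM2l // ler_nat; lia.
  have h2 : ((X * L)%:R : R) < c * (dfo (n - t))%:R.
    by rewrite dfoE !natrM mulrA ltr_pM2r // ltr0n.
  have h3 : ((#|F|)%:R : R) < (X * L)%:R by rewrite ltr_nat.
  by have := le_lt_trans hF (lt_trans h3 h2); rewrite ltxx.
have [Sc [good rem]] := pieces pmF L0 (subxx F).
have hSsz : forall S, S \in Sc -> (M * (#|S| ^ t.+1 + 1) + t + 4 * #|S| + 3 <= n)%N.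
  by move=> S /good [A [_ _ _ _ b]]; exact: hsize.
have hSin : forall S, S \in Sc -> exists2 a, a \in F & S \subset a.
  move=> S /good [A [AF A0 hA _ _]]; case/card_gt0P: A0 => a aA.
  by exists a; [exact: (subsetP AF) | exact: hA].
have hcross : forall S1 S2, S1 \in Sc -> S2 \in Sc -> (t <= #|S1 :&: S2|)%N.
  move=> S1 S2 h1 h2; have := hSsz _ h1; have := hSsz _ h2.
  case: (good _ h1) => A [AF A0 hA spA _]; case: (good _ h2) => B [BF B0 hB spB _].
  move=> z1 z2; apply: (cross pmF tF AF BF A0 B0 hA hB spA spB); first [exact: sz_aux z1 | exact: sz_aux z2].
set remset := [set m in F | [forall S in Sc, ~~ (S \subset m)]] in rem.
case: (set_0Vmem Sc) => [Sc0 | [S0 S0c]].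
  exfalso; apply: (contra 1%N) => //.
    have LdN : (L <= dfo n)%N.
      have [h1 h2] := sub_aux htn.
      rewrite /L (dfo_split h1) h2.
      by rewrite leq_pmulr // Pp_gt0.
    have := hsize 0%N; rewrite !expn0 !muln1 => /(_ LdN).
    rewrite exp0n //; exact: sz_aux2.
  rewrite mul1n; apply: leq_ltn_trans rem; apply: subset_leq_card.
  apply/subsetP => m mF; rewrite inE mF /=; apply/forallP => S.
  by rewrite Sc0 inE.
case: (@arg_maxnP _ S0 (fun S => S \in Sc) (fun S => #|S|) S0c) => S1 S1c hmax.
have [a1 a1F sa1] := hSin S1 S1c.
have pa1 := pmF a1 a1F.
case: (boolP [exists X : {set {set 'I_(2 * n)}},
           [&& X \subset S1, #|X| == t & [forall S in Sc, X \subset S]]]).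
  case/existsP => X /and3P[XS1 /eqP Xt /forallP hX].
  exists X; split => //.
    apply/andP; split.
      apply/forallP => e; apply/implyP => eX; rewrite /edge (pm_edge pa1) //.
      by apply: (subsetP sa1); apply: (subsetP XS1).
    exact: trivIsetS (subset_trans XS1 sa1) (pm_triv pa1).
  rewrite mul1r ler_nat; apply: ltnW; apply: leq_ltn_trans rem.
  apply: subset_leq_card; apply/subsetP => m; rewrite !inE => /andP[nr mF].
  rewrite mF /= in nr; rewrite mF /=; apply/forallP => S; apply/implyP => Sc1.
  apply/negP => Sm; have := hX S; rewrite Sc1 /= => XS.
  by rewrite (subset_trans XS Sm) in nr.
move=> hno; exfalso; apply: (contra (#|S1| ^ t.+1 + 1)%N).
- by rewrite addn1.
- exact: sz_aux3 (hSsz S1 S1c).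
pose Tt := [set X : {set {set 'I_(2 * n)}} | X \subset S1 & #|X| == t].
pose sx (X : {set {set 'I_(2 * n)}}) := odflt set0 [pick S in Sc | ~~ (X \subset S)].
have hsx : forall X : {set {set 'I_(2 * n)}}, (#|sx X| <= #|S1|)%N.
  move=> X; rewrite /sx; case: pickP => [S /andP[Sc1 _] | _] /=; first exact: hmax.
  by rewrite cards0.
have cov : F \subset remset :|: \bigcup_(X in Tt) \bigcup_(f in sx X :\: X) Mof (f |: X).
  apply/subsetP => m mF; rewrite inE; case: (boolP (m \in remset)) => //= hm.
  have [S Sc1 Sm] : exists2 S, S \in Sc & S \subset m.
    move: hm; rewrite inE mF /= => /forallPn [S]; rewrite negb_imply negbK.
    by case/andP => ? ?; exists S.
  have [X [XS Xt]] := exists_sub (hcross S S1 Sc1 S1c).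
  have XS1 : X \subset S1 by apply: subset_trans XS (subsetIr _ _).
  have XS' : X \subset S by apply: subset_trans XS (subsetIl _ _).
  have XT : X \in Tt by rewrite inE XS1 Xt eqxx.
  have : ~~ [forall S in Sc, X \subset S].
    by have := negP (existsPn hno X); rewrite XS1 Xt eqxx /= => h; apply/negP.
  case/forallPn => S2' ; rewrite negb_imply => /andP[S2'c nXS2'].
  have [S2 [S2c nXS2 eS2]] : exists S2, [/\ S2 \in Sc, ~~ (X \subset S2) & sx X = S2].
    rewrite /sx; case: pickP => [S2 /andP[h1 h2] | none] /=; first by exists S2.
    by have := none S2'; rewrite S2'c nXS2'.
  have tS2 := hcross S S2 Sc1 S2c.
  have [f fS fX] : exists2 f, f \in S :&: S2 & f \notin X.
    case: (boolP [exists f in S :&: S2, f \notin X]) => [/exists_inP // | /exists_inPn hf].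
    exfalso.
    have sub : S :&: S2 \subset X :&: S2.
      apply/subsetP => e eSS; rewrite inE; have := hf e eSS; rewrite negbK => ->.
      by move: eSS; rewrite inE => /andP[].
    have lt : (#|X :&: S2| < t)%N.
      have := subset_leqif_card (subsetIl X S2); rewrite -Xt => -[h1 h2].
      rewrite ltn_neqAle h1 andbT h2; apply/negP => /subsetIP [_ ?].
      by rewrite (_ : X \subset S2) in nXS2.
    have := leq_trans tS2 (subset_leq_card sub); rewrite leqNgt lt //.
  apply/bigcupP; exists X => //; apply/bigcupP; exists f.
    by rewrite eS2 inE fX; move: fS; rewrite inE => /andP[].
  rewrite inE pmF //= subUset sub1set (subset_trans XS' Sm) andbT.
  by move: fS; rewrite inE => /andP[fS _]; apply: (subsetP Sm).
apply: (leq_ltn_trans (subset_leq_card cov)).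
apply: (leq_ltn_trans (leq_card_setU _ _)).
have inner : forall X, X \in Tt ->
    (#|\bigcup_(f in sx X :\: X) Mof (f |: X)| <= #|S1| * L)%N.
  move=> X; rewrite inE => /andP[_ /eqP Xt].
  apply: leq_trans (card_bigcup_le _ _) _.
  apply: (@leq_trans (\sum_(f in sx X :\: X) L)).
    apply: leq_sum => f; rewrite inE => /andP[fX _].
    apply: leq_trans (Mof_bound _) _; rewrite cardsU1 fX Xt /L.
    by rewrite (_ : n - (true + t) = n - t - 1)%N // add1n subnS subn1.
  rewrite sum_nat_const leq_mul2r; apply/orP; right.
  by apply: leq_trans (hsx X); apply: subset_leq_card; apply: subsetDl.
have outer : (#|\bigcup_(X in Tt) \bigcup_(f in sx X :\: X) Mof (f |: X)|
              <= #|S1| ^ t * #|S1| * L)%N.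
  apply: leq_trans (card_bigcup_le _ _) _.
  apply: (@leq_trans (\sum_(X in Tt) (#|S1| * L))); first exact: leq_sum.
  rewrite sum_nat_const -mulnA leq_mul2r; apply/orP; right.
  by rewrite cards_draws bin_le_exp.
move: rem outer; rewrite expnSr.
move: (#|remset|) (#|\bigcup_(X in Tt) _|) (#|S1| ^ t * #|S1|)%N => x y z.
clear; nia.
Qed.
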